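(* Let $\Theta_n^{(\eta)}$ and $\Theta_n^{(f)}$ be sets of real functions on the covariate space, where every $f\in\Theta_n^{(f)}$ satisfies $\|f\|_\infty\le N_n$ for a number $N_n>0$, and let $\Theta_n=\Theta_n^{(\eta)}\times\Theta_n^{(f)}$, whose elements $(\eta,f)$ are identified with the conditional densities $\mathcal{P}_{\eta,V}$, $V=e^f$. Then, for every $\epsilon>0$, $$\log N(3\epsilon,\Theta_n,d_n)\lesssim\log N(\epsilon/e^{N_n},\Theta_n^{(\eta)},\|\cdot\|_n)+\log N(\epsilon,\Theta_n^{(f)},\|\cdot\|_n),$$ where the constant implicit in $\lesssim$ does not depend on $\epsilon$ or $n$.
   Context: Let $Q$ be a probability measure on the covariate space $[0,1]^d$ (either the covariate distribution or the empirical measure of fixed design points). For functions $\eta$ and $V>0$ let $\mathcal{P}_{\eta,V}(y\mid x)=(2\pi V(x))^{-1/2}\exp(-(y-\eta(x))^2/(2V(x)))$, and let $d_n^2(\mathcal{P}_{\eta_1,V_1},\mathcal{P}_{\eta_2,V_2})=\int\!\!\int(\mathcal{P}_{\eta_1,V_1}^{1/2}-\mathcal{P}_{\eta_2,V_2}^{1/2})^2\,dy\,dQ(x)$. $\|\cdot\|_n$ denotes the norm of $L_2(Q)$ and $\|\cdot\|_\infty$ the supremum norm. $N(\epsilon,S,\rho)$ is the $\epsilon$-covering number of $S$ with respect to $\rho$ (minimal number of $\rho$-balls of radius $\epsilon$ covering $S$). *)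

(* Defs.v *)
From HB Require Import structures.
From mathcomp Require Import all_boot all_order all_algebra.
From mathcomp Require Import all_classical all_reals all_analysis.
Set Implicit Arguments. Unset Strict Implicit. Unset Printing Implicit Defensive.
Import Order.TTheory GRing.Theory Num.Theory.
Local Open Scope classical_set_scope.
Local Open Scope ring_scope.

Definition cube (R : realType) (d : nat) : set (d.-tuple R) :=
  [set x | forall i : 'I_d, 0 <= tnth x i <= 1].

Definition gdens (R : realType) (m v y : R) : R :=
  (Num.sqrt (2 * pi * v))^-1 * expR (- (y - m) ^+ 2 / (2 * v)).

Definition cdens (R : realType) (T : Type) (p : (T -> R) * (T -> R)) (x : T) (y : R) : R :=
  gdens (p.1 x) (expR (p.2 x)) y.

Definition hell2 (R : realType) (dT : measure_display) (T : measurableType dT)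
  (Q : probability T R) (p1 p2 : (T -> R) * (T -> R)) : \bar R :=
  (\int[Q]_x \int[@lebesgue_measure R]_y
     ((Num.sqrt (cdens p1 x y) - Num.sqrt (cdens p2 x y)) ^+ 2)%:E)%E.

Definition dn (R : realType) (dT : measure_display) (T : measurableType dT)
  (Q : probability T R) (p1 p2 : (T -> R) * (T -> R)) : \bar R :=
  match hell2 Q p1 p2 with
  | r%:E => (Num.sqrt r)%:E
  | +oo%E => +oo%E
  | -oo%E => 0%E
  end.

Definition L2dist (R : realType) (dT : measure_display) (T : measurableType dT)
  (Q : probability T R) (g1 g2 : T -> R) : \bar R :=
  Lnorm Q 2%:E (fun x => (g1 x - g2 x)%:E).

(* eps-covering number of S w.r.t. rho, with (closed) balls centred at points of Cen:
   the least n such that n balls of radius eps cover S; +oo if there is none. *)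
Definition covnum (R : realType) (U : Type) (Cen : set U) (rho : U -> U -> \bar R)
  (eps : R) (S : set U) : \bar R :=
  ereal_inf [set (n%:R)%:E | n in [set n : nat | exists c : 'I_n -> U,
     (forall i, Cen (c i)) /\
     (forall s, S s -> exists i, (rho (c i) s <= eps%:E)%E)]].

Definition elog (R : realType) (x : \bar R) : \bar R :=
  match x with
  | r%:E => (ln r)%:E
  | +oo%E => +oo%E
  | -oo%E => -oo%E
  end.

Definition mfuns (R : realType) (dT : measure_display) (T : measurableType dT) : set (T -> R) :=
  [set g | measurable_fun setT g].

Arguments cube R d : clear implicits.
Arguments mfuns R {dT} T.

(* Main.v *)
Require Import Defs.
From HB Require Import structures.
From mathcomp Require Import all_boot all_order all_algebra.
From mathcomp Require Import all_classical all_reals all_analysis.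
From mathcomp Require Import normal_distribution measurable_realfun.
From mathcomp Require Import ring lra.
Import Order.TTheory GRing.Theory Num.Theory.
Local Open Scope classical_set_scope.
Local Open Scope ring_scope.

Set Implicit Arguments. Unset Strict Implicit.

Section G.
Variable R : realType.

Lemma sqrt_expR (a : R) : Num.sqrt (expR a) = expR (a / 2).
Proof.
have -> : expR a = expR (a / 2) ^+ 2.
  by rewrite -expRM_natr -mulrA mulVf ?mulr1 // pnatr_eq0.
by rewrite sqrtr_sqr ger0_norm // expR_ge0.
Qed.

Lemma twopi_gt0 : 0 < 2 * pi :> R.
Proof. by rewrite mulr_gt0 ?pi_gt0. Qed.

Lemma gdens_exp (m f y : R) :
  gdens m (expR f) y = expR (- (ln (2 * pi) + f) / 2 - (y - m) ^+ 2 / (2 * expR f)).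
Proof.
rewrite /gdens.
have -> : 2 * pi * expR f = expR (ln (2 * pi) + f) by rewrite expRD lnK // posrE twopi_gt0.
rewrite sqrt_expR -expRN expRD; congr (expR _ * expR _).
  by rewrite mulNr.
by rewrite mulNr.
Qed.

Lemma normal_pdf_exp (M g y : R) :
  normal_pdf M (expR (g / 2)) y = expR (- (ln (2 * pi) + g) / 2 - (y - M) ^+ 2 / (2 * expR g)).
Proof.
rewrite normal_pdfE ?expR_eq0 // /normal_peak /normal_fun.
have e2 : expR (g / 2) ^+ 2 = expR g.
  by rewrite -expRM_natr -mulrA mulVf ?mulr1 // pnatr_eq0.
rewrite e2.
have -> : expR g * pi *+ 2 = expR (ln (2 * pi) + g).
  by rewrite expRD lnK ?posrE ?twopi_gt0 //; ring.
rewrite sqrt_expR -expRN expRD; congr (expR _ * expR _).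
  by rewrite mulNr.
by rewrite mulNr -mulr_natr [_ * 2]mulrC.
Qed.


Definition Sv (f1 f2 : R) := expR f1 + expR f2.
Definition gg (f1 f2 : R) := ln 2 + f1 + f2 - ln (Sv f1 f2).
Definition MM (m1 f1 m2 f2 : R) := (m1 * expR f2 + m2 * expR f1) / Sv f1 f2.
Definition cc (m1 f1 m2 f2 : R) :=
  gg f1 f2 / 2 - (f1 + f2) / 4 - (m1 - m2) ^+ 2 / (4 * Sv f1 f2).

Lemma Sv_gt0 f1 f2 : 0 < Sv f1 f2.
Proof. by rewrite /Sv addr_gt0 ?expR_gt0. Qed.

Lemma expR_gg f1 f2 : expR (gg f1 f2) = 2 * expR f1 * expR f2 / Sv f1 f2.
Proof.
rewrite /gg expRB !expRD lnK ?posrE ?Sv_gt0 // lnK ?posrE //.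
exact: Sv_gt0.
Qed.

Lemma sqrt_prod (m1 f1 m2 f2 y : R) :
  Num.sqrt (gdens m1 (expR f1) y) * Num.sqrt (gdens m2 (expR f2) y) =
  expR (cc m1 f1 m2 f2) * normal_pdf (MM m1 f1 m2 f2) (expR (gg f1 f2 / 2)) y.
Proof.
rewrite !gdens_exp !sqrt_expR normal_pdf_exp -!expRD expR_gg; congr expR.
rewrite /cc /MM.
have h1 := expR_gt0 f1; have h2 := expR_gt0 f2; have hs := Sv_gt0 f1 f2.
rewrite /Sv in hs *.
field.
by rewrite !gt_eqF.
Qed.


Lemma gdens_normal (m f y : R) : gdens m (expR f) y = normal_pdf m (expR (f / 2)) y.
Proof. by rewrite gdens_exp normal_pdf_exp. Qed.

Lemma gdens_ge0 (m f y : R) : 0 <= gdens m (expR f) y.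
Proof. by rewrite gdens_exp expR_ge0. Qed.

Lemma inner_int (m1 f1 m2 f2 : R) :
  (\int[lebesgue_measure]_y
     ((Num.sqrt (gdens m1 (expR f1) y) - Num.sqrt (gdens m2 (expR f2) y)) ^+ 2)%:E
   = ((2 - 2 * expR (cc m1 f1 m2 f2))%R)%:E)%E.
Proof.
pose n1 := normal_pdf m1 (expR (f1 / 2)).
pose n2 := normal_pdf m2 (expR (f2 / 2)).
pose n3 := normal_pdf (MM m1 f1 m2 f2) (expR (gg f1 f2 / 2)).
pose k := - 2 * expR (cc m1 f1 m2 f2).
have E y : ((Num.sqrt (gdens m1 (expR f1) y) - Num.sqrt (gdens m2 (expR f2) y)) ^+ 2)%:E
    = ((n1 y)%:E + ((n2 y)%:E + (k%:E * (n3 y)%:E)))%E.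
  rewrite -!EFinM -!EFinD; congr EFin.
  rewrite sqrrB !sqr_sqrtr ?gdens_ge0 // -mulrA sqrt_prod !gdens_normal /k /n1 /n2 /n3.
  ring.
under eq_integral => y _ do rewrite E.
have i1 := @integrable_normal_pdf R m1 (expR (f1 / 2)).
have i2 := @integrable_normal_pdf R m2 (expR (f2 / 2)).
have i3 := @integrable_normal_pdf R (MM m1 f1 m2 f2) (expR (gg f1 f2 / 2)).
rewrite integralD //; last first.
  by apply: integrableD => //; apply: integrableZl.
rewrite integralD //; last by apply: integrableZl.
rewrite integralZl // !integral_normal_pdf -!EFinM -!EFinD /k; congr EFin.
ring.
Qed.


Lemma expR_half_sq (f : R) : expR (f / 2) ^+ 2 = expR f.
Proof. by rewrite -expRM_natr -mulrA mulVf ?mulr1 // pnatr_eq0. Qed.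

Lemma expR_diff (u w : R) : w <= u -> 0 <= expR u - expR w <= (u - w) * expR u.
Proof.
move=> wu; apply/andP; split.
  by rewrite subr_ge0 ler_expR.
have h := expR_ge1Dx (w - u).
have -> : expR w = expR u * expR (w - u) by rewrite -expRD; congr expR; ring.
have hu := expR_gt0 u.
nra.
Qed.

Lemma sq_diff_bound (u w : R) :
  (expR u - expR w) ^+ 2 <= (u - w) ^+ 2 * (expR u ^+ 2 + expR w ^+ 2).
Proof.
have hu := expR_gt0 u; have hw := expR_gt0 w.
have [wu|uw] := leP w u.
  have /andP[h1 h2] := (@expR_diff u w wu).
  have : (expR u - expR w) ^+ 2 <= ((u - w) * expR u) ^+ 2.
    by rewrite ler_sqr // nnegrE // (le_trans h1 h2).
  move=> h; apply: (le_trans h); rewrite exprMn ler_wpM2l ?sqr_ge0 //.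
  by rewrite lerDl sqr_ge0.
have /andP[h1 h2] := (@expR_diff w u (ltW uw)).
have : (expR w - expR u) ^+ 2 <= ((w - u) * expR w) ^+ 2.
  by rewrite ler_sqr // nnegrE // (le_trans h1 h2).
move=> h; rewrite -sqrrN opprB; apply: (le_trans h).
rewrite exprMn -sqrrN opprB ler_wpM2l ?sqr_ge0 //.
by rewrite lerDr sqr_ge0.
Qed.

Lemma bc_bound (m1 f1 m2 f2 : R) :
  2 - 2 * expR (cc m1 f1 m2 f2) <= (f1 - f2) ^+ 2 / 2 + (m1 - m2) ^+ 2 / (2 * expR f2).
Proof.
set a := expR (f1 / 2); set b := expR (f2 / 2).
have ha : 0 < a by apply: expR_gt0.
have hb : 0 < b by apply: expR_gt0.
have va : expR f1 = a ^+ 2 by rewrite expR_half_sq.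
have vb : expR f2 = b ^+ 2 by rewrite expR_half_sq.
set D := (m1 - m2) ^+ 2 / (4 * Sv f1 f2).
set K := expR (gg f1 f2 / 2 - (f1 + f2) / 4).
have hK : 0 <= K by apply: expR_ge0.
have ecc : expR (cc m1 f1 m2 f2) = K * expR (- D).
  by rewrite /K -expRD /cc; congr expR; rewrite /D; ring.
have hS : 0 < Sv f1 f2 by apply: Sv_gt0.
have hD : 0 <= D by rewrite /D divr_ge0 ?sqr_ge0 // mulr_ge0 // ltW.
have eD := expR_ge1Dx (- D).
have eD1 : expR (- D) <= 1 by rewrite expR_le1 oppr_le0.
have K2 : K ^+ 2 = 2 * a * b / (a ^+ 2 + b ^+ 2).
  rewrite /K -expRM_natr.
  have -> : (gg f1 f2 / 2 - (f1 + f2) / 4) * 2%:R = gg f1 f2 - (f1 / 2 + f2 / 2).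
    by rewrite mulr_natr mulr2n; field.
  rewrite expRB expR_gg expRD -/a -/b /Sv va vb.
  field.
  by rewrite !gt_eqF // ?mulr_gt0 // addr_gt0 // exprn_gt0.
have hab : 0 < a ^+ 2 + b ^+ 2 by rewrite addr_gt0 // exprn_gt0.
have K2le1 : K ^+ 2 <= 1.
  rewrite K2 ler_pdivrMr // mul1r; have := sqr_ge0 (a - b); rewrite sqrrB; lra.
have Kle1 : K <= 1 by nra.
have sqd := sq_diff_bound (f1 / 2) (f2 / 2).
rewrite -/a -/b in sqd.
have one_m_K2 : 1 - K ^+ 2 <= (f1 / 2 - f2 / 2) ^+ 2.
  have -> : 1 - K ^+ 2 = (a - b) ^+ 2 / (a ^+ 2 + b ^+ 2).
    by rewrite K2; field; rewrite gt_eqF.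
  by rewrite ler_pdivrMr // -va -vb.
have DS : D <= (m1 - m2) ^+ 2 / (4 * expR f2).
  rewrite /D ler_pdivrMr ?mulr_gt0 // mulrAC ler_pdivlMr ?mulr_gt0 ?expR_gt0 //.
  rewrite ler_wpM2l ?sqr_ge0 // ler_pM2l // /Sv lerDr expR_ge0 //.
rewrite ecc.
have e1 : (f1 - f2) ^+ 2 / 2 = 2 * (f1 / 2 - f2 / 2) ^+ 2 by field.
have e2 : (m1 - m2) ^+ 2 / (2 * expR f2) = 2 * ((m1 - m2) ^+ 2 / (4 * expR f2)).
  by field; rewrite gt_eqF ?expR_gt0.
rewrite e1 e2.
nra.
Qed.

End G.


Section M.
Variable R : realType.
Variables (dT : measure_display) (T : measurableType dT).

Lemma cc_alt (m1 f1 m2 f2 : R) : cc m1 f1 m2 f2 =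
  (ln 2 + f1 + f2 - ln (expR f1 + expR f2)) / 2 - (f1 + f2) / 4
  - (m1 - m2) ^+ 2 * expR (- ln (4 * (expR f1 + expR f2))).
Proof.
rewrite /cc /gg /Sv expRN lnK //; last by rewrite posrE mulr_gt0 // addr_gt0 // expR_gt0.

Qed.

Lemma measurable_cc (a b c e : T -> R) :
  measurable_fun setT a -> measurable_fun setT b ->
  measurable_fun setT c -> measurable_fun setT e ->
  measurable_fun setT (fun x => cc (a x) (b x) (c x) (e x)).
Proof.
move=> ma mb mc me.
have -> : (fun x => cc (a x) (b x) (c x) (e x)) = (fun x =>
  (ln 2 + b x + e x - ln (expR (b x) + expR (e x))) * 2^-1 - (b x + e x) * 4^-1
  - (a x - c x) ^+ 2 * expR (- ln (4 * (expR (b x) + expR (e x))))).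
  by apply/funext => x; rewrite cc_alt.
have mS : measurable_fun setT (fun x => expR (b x) + expR (e x)).
  by apply: measurable_funD; apply: measurableT_comp => //; exact: measurable_expR.
apply: measurable_funB.
  apply: measurable_funB.
    apply: measurable_funM => //.
    apply: measurable_funB.
      by apply: measurable_funD => //; apply: measurable_funD.
    by apply: measurableT_comp => //; exact: measurable_ln.
  by apply: measurable_funM => //; apply: measurable_funD.
apply: measurable_funM.
  by apply: measurable_funX; apply: measurable_funB.
apply: measurableT_comp; first exact: measurable_expR.
apply: measurableT_comp; first exact: oppr_measurable.
apply: measurableT_comp; first exact: measurable_ln.
by apply: measurable_funM.
Qed.


Lemma L2_sq (Q : probability T R) (g1 g2 : T -> R) (a : R) : 0 <= a ->
  (L2dist Q g1 g2 <= a%:E)%E -> (\int[Q]_x ((g1 x - g2 x) ^+ 2)%:E <= (a ^+ 2)%:E)%E.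
Proof.
rewrite /L2dist => a0 h.
have two0 : (2:R) != 0 by rewrite pnatr_eq0.
have := @poweR_Lnorm _ _ _ Q (fun x => (g1 x - g2 x)%:E) 2 two0.
have E x : (`|(g1 x - g2 x)%:E| `^ 2 = ((g1 x - g2 x) ^+ 2)%:E)%E.
  by rewrite abse_EFin poweR_EFin powR_mulrn // real_normK // num_real.
under eq_integral => x _ do rewrite E.
move=> <-.
have := @gt0_ler_poweR R 2 (ler0n _ 2) _ (a%:E) _ _ h.
rewrite poweR_EFin powR_mulrn //; apply.
- by rewrite in_itv /= Lnorm_ge0 leey.
- by rewrite in_itv /= lee_fin a0 leey.
Qed.


Lemma dn_bound (Q : probability T R) (A : set T) (c s : (T -> R) * (T -> R)) (Nn eps : R) :
  measurable A -> Q A = 1%E -> 0 < eps -> 0 < Nn ->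
  measurable_fun setT c.1 -> measurable_fun setT c.2 ->
  measurable_fun setT s.1 -> measurable_fun setT s.2 ->
  (forall x, A x -> `|s.2 x| <= Nn) ->
  (L2dist Q c.1 s.1 <= (eps / expR Nn)%:E)%E -> (L2dist Q c.2 s.2 <= eps%:E)%E ->
  (dn Q c s <= (3 * eps)%:E)%E.
Proof.
move=> mA QA e0 N0 mc1 mc2 ms1 ms2 sN L1 L2.
have eN := expR_gt0 Nn.
pose F x := ((2 - 2 * expR (cc (c.1 x) (c.2 x) (s.1 x) (s.2 x)))%R)%:E.
pose G x := (((c.2 x - s.2 x) ^+ 2 / 2 + expR Nn / 2 * (c.1 x - s.1 x) ^+ 2)%R)%:E.
have HF : hell2 Q c s = (\int[Q]_x F x)%E.
  by rewrite /hell2; apply: eq_integral => x _; rewrite /cdens inner_int.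
have F0 x : (0 <= F x)%E.
  rewrite /F -inner_int; apply: integral_ge0 => y _; rewrite lee_fin; exact: sqr_ge0.
have mF : measurable_fun setT F.
  apply/measurable_EFinP; apply: measurable_funB => //.
  apply: measurable_funM => //; apply: measurableT_comp; first exact: measurable_expR.
  exact: measurable_cc.
have G0 x : (0 <= G x)%E.
  rewrite /G lee_fin; apply: addr_ge0; apply: mulr_ge0; rewrite ?sqr_ge0 // ?divr_ge0 ?invr_ge0 ?expR_ge0 //.
have mG : measurable_fun setT G.
  apply/measurable_EFinP; apply: measurable_funD.
    by apply: measurable_funM => //; apply: measurable_funX; apply: measurable_funB.
  by apply: measurable_funM => //; apply: measurable_funX; apply: measurable_funB.
have FG : (\int[Q]_x F x <= \int[Q]_x G x)%E.
  apply: (@ae_ge0_le_integral _ _ _ Q setT measurableT F G (fun x _ => F0 x) mF (fun x _ => G0 x) mG).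
  exists (~` A); split; first exact: measurableC.
    by apply: (eq_trans (@probability_setC _ _ _ Q A mA)); rewrite QA subee.
  move=> x /= H Ax; apply: H => _.
  rewrite /F /G lee_fin.
  apply: (le_trans (bc_bound _ _ _ _)).
  rewrite lerD2l.
  have h : (expR (s.2 x))^-1 <= expR Nn.
    rewrite -expRN ler_expR.
    by have := sN x Ax; rewrite ler_norml => /andP[? _]; lra.
  have ha := sqr_ge0 (c.1 x - s.1 x).
  rewrite invfM.
  nra.
have IG : (\int[Q]_x G x = (2^-1)%:E * \int[Q]_x ((c.2 x - s.2 x) ^+ 2)%:E
    + (expR Nn / 2)%:E * \int[Q]_x ((c.1 x - s.1 x) ^+ 2)%:E)%E.
  rewrite /G.
  under eq_integral => x _ do rewrite EFinD (EFinM _ (2^-1)) muleC -EFinM.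
  rewrite ge0_integralD //; last first.
  - apply/measurable_EFinP; apply: measurable_funM => //.
    by apply: measurable_funX; apply: measurable_funB.
  - by move=> x _; rewrite lee_fin mulr_ge0 ?divr_ge0 ?expR_ge0 ?sqr_ge0.
  - apply/measurable_EFinP; apply: measurable_funM => //.
    by apply: measurable_funX; apply: measurable_funB.
  - by move=> x _; rewrite lee_fin mulr_ge0 ?invr_ge0 ?sqr_ge0.
  under eq_integral => x _ do rewrite EFinM.
  rewrite ge0_integralZl_EFin.
  all: try (by move=> x _; rewrite lee_fin sqr_ge0).
  all: try (by apply/measurable_EFinP; apply: measurable_funX; apply: measurable_funB).
  all: try (by rewrite invr_ge0).
  under [X in (_ + X)%E]eq_integral => x _ do rewrite EFinM.
  rewrite ge0_integralZl_EFin //.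
  all: try (by move=> x _; rewrite lee_fin sqr_ge0).
  all: try (by apply/measurable_EFinP; apply: measurable_funX; apply: measurable_funB).
  all: try (by rewrite divr_ge0 ?expR_ge0).
  all: try done.
have I2 := @L2_sq Q _ _ _ (ltW e0) L2.
have I1 := @L2_sq Q _ _ _ (divr_ge0 (ltW e0) (expR_ge0 _)) L1.
have HB : (hell2 Q c s <= (eps ^+ 2)%:E)%E.
  rewrite HF (le_trans FG) // IG.
  apply: (le_trans (leeD (lee_wpmul2l _ I2) (lee_wpmul2l _ I1))).
  - by rewrite lee_fin invr_ge0.
  - by rewrite lee_fin divr_ge0 ?expR_ge0.
  rewrite -!EFinM -EFinD lee_fin.
  have -> : expR Nn / 2 * (eps / expR Nn) ^+ 2 = eps ^+ 2 / (2 * expR Nn).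
    by field; rewrite gt_eqF.
  have : 1 <= expR Nn by rewrite -expR0 ler_expR ltW.
  move=> h1.
  have : eps ^+ 2 / (2 * expR Nn) <= eps ^+ 2 / 2.
    by rewrite ler_pdivrMr ?mulr_gt0 // mulrAC ler_pdivlMr // ler_wpM2l ?sqr_ge0 // ler_peMr.
  nra.
have H0 : (0 <= hell2 Q c s)%E.
  by rewrite HF; apply: integral_ge0 => x _; exact: F0.
rewrite /dn.
move: HB H0; case: (hell2 Q c s) => [r| |] //=.
  rewrite !lee_fin => HB H0.
  apply: (le_trans (ler_wsqrtr HB)).
  rewrite sqrtr_sqr ger0_norm ?ltW //; lra.
Qed.

End M.


Section C.
Variable R : realType.

Definition iscover (U : Type) (Cen : set U) (rho : U -> U -> \bar R) (eps : R) (S : set U)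
  (n : nat) := exists c : 'I_n -> U,
     (forall i, Cen (c i)) /\ (forall s, S s -> exists i, (rho (c i) s <= eps%:E)%E).

Lemma covnum_le (U : Type) (Cen : set U) (rho : U -> U -> \bar R) (eps : R) (S : set U) n :
  iscover Cen rho eps S n -> (covnum Cen rho eps S <= (n%:R)%:E)%E.
Proof. by move=> h; apply: ereal_inf_lbound; exists n. Qed.

Lemma covnum_cases (U : Type) (Cen : set U) (rho : U -> U -> \bar R) (eps : R) (S : set U) :
  covnum Cen rho eps S = +oo%E \/
  exists n, iscover Cen rho eps S n /\ covnum Cen rho eps S = (n%:R)%:E.
Proof.
have [[n0 hn0]|none] := pselect (exists n, iscover Cen rho eps S n); last first.
  left; apply/ereal_inf_pinfty => y [n hn _]; exfalso; apply: none; exists n; exact: hn.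
right.
have ex : exists n, (fun n => `[< iscover Cen rho eps S n >]) n by exists n0; apply/asboolP.
case: (ex_minnP ex) => n /asboolP hn hmin.
exists n; split => //.
apply/eqP; rewrite eq_le covnum_le //=.
apply: le_ereal_inf_tmp => _ [m hm <-].
rewrite lee_fin ler_nat; apply: hmin; exact/asboolP.
Qed.

Lemma ln_nat_ge0 (n : nat) : 0 <= ln (n%:R : R).
Proof.
case: n => [|n]; first by rewrite ln0.
by apply: ln_ge0; rewrite ler1n.
Qed.

Lemma elog_ge0 (x : \bar R) : (x = +oo%E \/ exists n : nat, x = (n%:R)%:E) -> (0 <= elog x)%E.
Proof.
by case=> [->|[n ->]] //=; rewrite lee_fin ln_nat_ge0.
Qed.


Lemma prod_cover (U1 U2 : Type) (Cen1 : set U1) (Cen2 : set U2)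
  (rho1 : U1 -> U1 -> \bar R) (rho2 : U2 -> U2 -> \bar R)
  (rho : U1 * U2 -> U1 * U2 -> \bar R) (e1 e2 e : R) (S1 : set U1) (S2 : set U2) a b :
  iscover Cen1 rho1 e1 S1 a -> iscover Cen2 rho2 e2 S2 b ->
  (forall c s, Cen1 c.1 -> Cen2 c.2 -> S1 s.1 -> S2 s.2 ->
     (rho1 c.1 s.1 <= e1%:E)%E -> (rho2 c.2 s.2 <= e2%:E)%E -> (rho c s <= e%:E)%E) ->
  iscover (Cen1 `*` Cen2) rho e (S1 `*` S2) (a * b).
Proof.
move=> [c1 [C1 H1]] [c2 [C2 H2]] H.
have E : #|{: 'I_a * 'I_b}| = (a * b)%N by rewrite card_prod !card_ord.
exists (fun k => let p := enum_val (cast_ord (esym E) k) in (c1 p.1, c2 p.2)).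
split.
  by move=> k /=; split; [apply: C1|apply: C2].
move=> s [s1 s2].
have [i hi] := H1 _ s1.
have [j hj] := H2 _ s2.
exists (cast_ord E (enum_rank (i, j))).
rewrite /= cast_ordK enum_rankK /=.
by apply: H => //=; try apply: C1; try apply: C2.
Qed.

End C.


Lemma cube_measurable (R : realType) (d : nat) : measurable (cube R d).
Proof.
have -> : cube R d = \bigcap_(i in [set: 'I_d])
    ((fun x : d.-tuple R => tnth x i) @^-1` [set` `[0%R, 1%R]]).
  apply/seteqP; split => x /=.
    by move=> h i _; rewrite /= in_itv /=; exact: h.
  by move=> h i; have := h i I; rewrite /= in_itv.
apply: fin_bigcap_measurable; first exact: finite_finset.
move=> i _.
rewrite -[X in measurable X]setTI; apply: measurable_tnth => //; exact: measurable_itv.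
Qed.

Unset Implicit Arguments. Set Strict Implicit.

Theorem lemma1 (R : realType) (d : nat) :
  exists C : R, 0 < C /\
  forall (Q : probability (d.-tuple R) R)
         (Theta_eta Theta_f : set (d.-tuple R -> R)) (Nn : R),
    Q (cube R d) = 1%E ->
    0 < Nn ->
    Theta_eta `<=` mfuns R (d.-tuple R) ->
    Theta_f `<=` mfuns R (d.-tuple R) ->
    (forall f, Theta_f f -> forall x, cube R d x -> `|f x| <= Nn) ->
    forall eps : R, 0 < eps ->
    (elog (covnum (mfuns R (d.-tuple R) `*` mfuns R (d.-tuple R)) (dn Q)
             (3 * eps) (Theta_eta `*` Theta_f))
     <= C%:E * (elog (covnum (mfuns R (d.-tuple R)) (L2dist Q) (eps / expR Nn) Theta_eta)
                + elog (covnum (mfuns R (d.-tuple R)) (L2dist Q) eps Theta_f)))%E.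
Proof.
exists 1; split => //.
move=> Q Te Tf Nn Qc N0 Tem Tfm fb eps e0.
have mc := @cube_measurable R d.
rewrite mul1e.
have c1 := covnum_cases (mfuns R (d.-tuple R)) (L2dist Q) (eps / expR Nn) Te.
have c2 := covnum_cases (mfuns R (d.-tuple R)) (L2dist Q) eps Tf.
have g1 : (0 <= elog (covnum (mfuns R (d.-tuple R)) (L2dist Q) (eps / expR Nn) Te))%E.
  by apply: elog_ge0; case: c1 => [->|[n [_ ->]]]; [left|right; exists n].
have g2 : (0 <= elog (covnum (mfuns R (d.-tuple R)) (L2dist Q) eps Tf))%E.
  by apply: elog_ge0; case: c2 => [->|[n [_ ->]]]; [left|right; exists n].
case: c1 => [P1|[a [ca P1]]].
  by rewrite P1 /= addye ?leey // gt_eqF // (lt_le_trans _ g2) // ltNye.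
case: c2 => [P2|[b [cb P2]]].
  by rewrite P2 /= addey ?leey // gt_eqF // (lt_le_trans _ g1) // ltNye.
have H : forall (c s : (d.-tuple R -> R) * (d.-tuple R -> R)),
    mfuns R (d.-tuple R) c.1 -> mfuns R (d.-tuple R) c.2 -> Te s.1 -> Tf s.2 ->
    (L2dist Q c.1 s.1 <= (eps / expR Nn)%:E)%E -> (L2dist Q c.2 s.2 <= eps%:E)%E ->
    (dn Q c s <= (3 * eps)%:E)%E.
  move=> c s m1 m2 t1 t2 l1 l2.
  apply: (@dn_bound R _ _ Q (cube R d) c s Nn eps mc Qc e0 N0 m1 m2 (Tem _ t1) (Tfm _ t2) _ l1 l2).
  by move=> x cx; exact: fb.
have pc := prod_cover ca cb H.
have le := covnum_le pc.
have g0 : (0 <= (ln (a%:R : R))%:E + (ln (b%:R : R))%:E)%E.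
  by rewrite -EFinD lee_fin addr_ge0 ?ln_nat_ge0.
case: (covnum_cases (mfuns R (d.-tuple R) `*` mfuns R (d.-tuple R)) (dn Q) (3 * eps) (Te `*` Tf))
  => [P|[k [_ P]]].
  by move: le; rewrite P leye_eq.
rewrite P P1 P2 /=.
move: le; rewrite P lee_fin ler_nat => kab.
case: k kab P => [|k] kab P.
  by rewrite ln0.
have a0 : (0 < a)%N by case: a {ca P1 g0 pc} kab => //; rewrite mul0n.
have b0 : (0 < b)%N by case: b {cb P2 g0 pc} kab => //; rewrite muln0.
rewrite -EFinD lee_fin -lnM ?posrE ?ltr0n // -natrM.
by rewrite ler_ln ?posrE ?ltr0n ?muln_gt0 ?a0 ?b0 // ler_nat.
Qed.
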